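(* As sequences indexed by $n\geq1$, $\mathrm{orb}^\sigma=\mathrm{orb}^\sigma_1\ast\mathbf{1}$ and $\mathrm{orb}^\sigma_1=\mathrm{A113788}$; that is, for every $n\geq1$, $\mathrm{orb}^\sigma(n)=\sum_{d\mid n}\mathrm{orb}^\sigma_1(d)$ and $\mathrm{orb}^\sigma_1(n)=\frac1n\sum_{d\mid n}p(d)\,\mu(n/d)$.
   Context: For $n\geq1$ let $V_n=\{v_0,\dots,v_{n-1}\}$, indices modulo $n$, and let the cyclic group $\langle\sigma\rangle=\{1,\sigma,\dots,\sigma^{n-1}\}$ act on subsets of $V_n$ via $\sigma(v_i)=v_{i+1}$. Let $\mathbf{X}_n$ be the family of subsets $X\subseteq V_n$ such that (a) there is no $i\in\mathbb{Z}_n$ with $v_i,v_{i+1}\in X$, and (b) for every $i\in\mathbb{Z}_n$ at least one of $v_i,v_{i+1},v_{i+2}$ lies in $X$ (for $n\geq 3$: the maximal independent sets of the cycle graph $C_n$). $\mathrm{orb}^\sigma(n)$ is the number of $\langle\sigma\rangle$-orbits of $\mathbf{X}_n$ (unlabeled MISs), and for $d\mid n$, $\mathrm{orb}^\sigma_d(n)$ is the number of these orbits of cardinality $n/d$. Perrin: $p(1)=0,p(2)=2,p(3)=3$, $p(n)=p(n-2)+p(n-3)$ ($n\geq4$). Dirichlet convolution $(f\ast g)(n)=\sum_{d\mid n}f(d)g(n/d)$; $\mu$ Möbius function; $\mathbf{1}(n)=1$; $\mathrm{A113788}(n)=\frac1n(p\ast\mu)(n)$. *)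

(* Defs.v *)
From mathcomp Require Import all_boot all_order all_algebra.
Set Implicit Arguments. Unset Strict Implicit. Unset Printing Implicit Defensive.
Import GRing.Theory Num.Theory.

(* V_n = 'I_n (v_i = i), the rotation sigma : v_i |-> v_{i+1} (indices mod n) *)
Definition sigma (n : nat) (i : 'I_n) : 'I_n := ordS i.

Definition sigma_set (n : nat) (X : {set 'I_n}) : {set 'I_n} := (@sigma n) @: X.

Definition inX (n : nat) (X : {set 'I_n}) : bool :=
  [forall i : 'I_n, ~~ ((i \in X) && (sigma i \in X))] &&
  [forall i : 'I_n, [|| i \in X, sigma i \in X | sigma (sigma i) \in X]].

Definition Xfam (n : nat) : {set {set 'I_n}} := [set X | inX X].

Definition sorbit (n : nat) (X : {set 'I_n}) : {set {set 'I_n}} :=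
  [set iter k (@sigma_set n) X | k : 'I_n].

Definition orbits (n : nat) : {set {set {set 'I_n}}} :=
  [set sorbit X | X in Xfam n].

Definition orb (n : nat) : nat := #|orbits n|.

Definition orbd (n d : nat) : nat := #|[set O in orbits n | #|O| == n %/ d]|.

Definition orb1 (n : nat) : nat := orbd n 1.

Fixpoint perrin (n : nat) : nat :=
  match n with
  | 0 => 3
  | 1 => 0
  | 2 => 2
  | (m.+1 as k).+2 => perrin k + perrin m
  end.

Definition mobius (n : nat) : int :=
  if n == 0 then 0%R
  else if all (fun p => logn p n == 1) (primes n)
       then ((-1) ^+ size (primes n))%R else 0%R.

(* Main.v *)
Require Import Defs.
From mathcomp Require Import all_boot all_order all_algebra.
From mathcomp Require Import zify.
Set Implicit Arguments. Unset Strict Implicit. Unset Printing Implicit Defensive.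
Import GRing.Theory Num.Theory.

Definition okb (a b c : bool) := ~~ (a && b) && [|| a, b | c].
Fixpoint linv (u : seq bool) : bool :=
  match u with
  | a :: ((b :: c :: _) as r) => okb a b c && linv r
  | _ => true
  end.

Lemma linvP u : reflect (forall i, i.+2 < size u -> okb (nth false u i) (nth false u i.+1) (nth false u i.+2)) (linv u).
Proof.
elim: u => [|a u IH]; first by apply: ReflectT.
case: u IH => [|b [|c r]] IH; try by apply: ReflectT => i /=; rewrite ?ltnS ?ltn0.
rewrite [linv _]/=; apply: (iffP andP).
  by case=> H1 /IH H2 [|i] //= Hi; apply: H2.
by move=> H; split; [apply: (H 0) | apply/IH => i Hi; apply: (H i.+1)].
Qed.

Fixpoint allw k : seq (seq bool) :=
  if k is k'.+1 then map (cons true) (allw k') ++ map (cons false) (allw k') else [:: [::]].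



Lemma mem_allw k s : (s \in allw k) = (size s == k).
Proof.
elim: k s => [|k IH] [|b s] //=; rewrite mem_cat.
  by apply/negbTE; rewrite negb_or; apply/andP; split; apply/mapP => -[].
have inj : forall c, injective (cons c : seq bool -> seq bool) by move=> c x y [].
case: b; rewrite (mem_map (inj _)) IH eqSS.
  by case: (size s == k) => //=; apply/negbTE/mapP => -[].
by rewrite orbC; case: (size s == k) => //=; apply/negbTE/mapP => -[].
Qed.

Lemma uniq_allw k : uniq (allw k).
Proof.
have inj : forall c, injective (cons c : seq bool -> seq bool) by move=> c x y [].
elim: k => [|k IH] //=; rewrite cat_uniq !map_inj_uniq //= IH /= andbT.
by apply/hasPn => s /mapP [t _ ->]; apply/mapP => -[].
Qed.

Section W.
Variable n : nat.
Definition w (X : {set 'I_n}) : seq bool := [seq i \in X | i <- enum 'I_n].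

Lemma size_w X : size (w X) = n.
Proof. by rewrite size_map size_enum_ord. Qed.

Lemma nth_w X (i : 'I_n) : nth false (w X) i = (i \in X).
Proof.
rewrite (nth_map i) ?size_enum_ord //; congr (_ \in X).
by apply: val_inj; rewrite /= nth_enum_ord.
Qed.

Lemma w_inj : injective w.
Proof.
move=> X Y H; apply/setP => i; by rewrite -!nth_w H.
Qed.

Lemma card_w (P : pred (seq bool)) : #|[set X : {set 'I_n} | P (w X)]| = count P (allw n).
Proof.
have pe : perm_eq (map w (enum {set 'I_n})) (allw n).
  apply: uniq_perm; [by rewrite map_inj_uniq ?enum_uniq //; exact: w_inj | exact: uniq_allw|].
  move=> s; rewrite mem_allw; apply/mapP/idP => [[X _ ->]|/eqP Hs]; first by rewrite size_w.
  exists [set i : 'I_n | nth false s i]; first by rewrite mem_enum.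
  apply: (@eq_from_nth _ false); first by rewrite size_w.
  by move=> i; rewrite Hs => Hi; rewrite (nth_w _ (Ordinal Hi)) inE.
rewrite -(permP pe) count_map cardE /enum_mem size_filter.
by rewrite count_filter; apply: eq_count => X; rewrite /= !inE andbT.
Qed.
End W.

Lemma inXP n (X : {set 'I_n}) : inX X = [forall i : 'I_n, okb (i \in X) (sigma i \in X) (sigma (sigma i) \in X)].
Proof.
rewrite /inX; apply/andP/forallP => [[/forallP H1 /forallP H2] i | H].
  by rewrite /okb H1 H2.
by split; apply/forallP => i; case/andP: (H i).
Qed.

Lemma nth_ext n (s : seq bool) j : 1 < n -> size s = n -> j < n.+2 ->
  nth false (s ++ take 2 s) j = nth false s (j %% n).
Proof.
move=> n2 sz hj; rewrite nth_cat sz; case: ltnP => hjn; first by rewrite modn_small.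
rewrite nth_take; last by lia.
have -> : j = n + (j - n) by lia.
by rewrite modnDl modn_small ?addKn //; lia.
Qed.

Lemma modnSm m d : (m %% d).+1 %% d = m.+1 %% d.
Proof. by rewrite -addn1 modnDml addn1. Qed.

Lemma sigmaE n (i : 'I_n) : val (sigma i) = i.+1 %% n.
Proof. by []. Qed.

Lemma inX_cyc n (X : {set 'I_n}) : 1 < n -> inX X = linv (w X ++ take 2 (w X)).
Proof.
move=> n2; have sz : size (w X ++ take 2 (w X)) = n.+2.
  rewrite size_cat size_take size_w; case: ifP; lia.
have e1 : forall i : 'I_n, nth false (w X) (i.+1 %% n) = (sigma i \in X).
  by move=> i; rewrite -nth_w sigmaE.
have e2 : forall i : 'I_n, nth false (w X) (i.+2 %% n) = (sigma (sigma i) \in X).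
  by move=> i; rewrite -nth_w !sigmaE modnSm.
rewrite inXP; apply/forallP/linvP => [H i|H i].
  rewrite sz ltnS ltnS => hi.
  rewrite !(@nth_ext n) ?size_w //; try lia.
  by rewrite (e1 (Ordinal hi)) (e2 (Ordinal hi)) (modn_small hi) (nth_w X (Ordinal hi)).
have hi : i.+2 < size (w X ++ take 2 (w X)) by rewrite sz !ltnS.
have := H i hi.
rewrite !(@nth_ext n) ?size_w //; try lia.
by rewrite (modn_small (ltn_ord i)) e1 e2 nth_w.
Qed.

Fixpoint F k (a b x y : bool) : nat :=
  if k is k'.+1 then
    (if okb a b true then F k' b true x y else 0) + (if okb a b false then F k' b false x y else 0)
  else linv [:: a; b; x; y].

Lemma FS k a b x y : F k.+1 a b x y =
  (if okb a b true then F k b true x y else 0) + (if okb a b false then F k b false x y else 0).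
Proof. by []. Qed.

Lemma count_andl (T : Type) (c : bool) (P : pred T) s :
  count (fun x => c && P x) s = if c then count P s else 0.
Proof. by case: c => //; elim: s. Qed.

Lemma countF k a b x y : count (fun r => linv (a :: b :: r ++ [:: x; y])) (allw k) = F k a b x y.
Proof.
elim: k a b => [|k IH] a b //=; first by rewrite addn0.
have e : forall c, count (fun r => linv (a :: b :: c :: r ++ [:: x; y])) (allw k) = if okb a b c then F k b c x y else 0.
  by move=> c; rewrite -IH -count_andl; apply: eq_count.
rewrite count_cat !count_map; exact: (congr2 addn (e true) (e false)).
Qed.

Lemma Frec k a b x y : F k.+3 a b x y = F k.+1 a b x y + F k a b x y.
Proof.
elim: k a b => [|k IH] a b; first by case: a; case: b; case: x; case: y.
rewrite FS !IH [F k.+2 a b x y]FS [F k.+1 a b x y]FS.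
by case: (okb a b true); case: (okb a b false); lia.
Qed.

Definition V k := F k true true true true + F k true false true false
  + F k false true false true + F k false false false false.

Lemma Vrec k : V k.+3 = V k.+1 + V k.
Proof. rewrite /V !Frec; lia. Qed.

Lemma card_Xfam2 k : #|Xfam k.+2| = V k.
Proof.
have -> : Xfam k.+2 = [set X | linv (w X ++ take 2 (w X))].
  by apply/setP => X; rewrite !inE inX_cyc.
rewrite (@card_w k.+2 (fun s => linv (s ++ take 2 s))) /= !count_cat !count_map !count_cat !count_map /V -!countF -!addnA.
apply: f_equal2; first by apply: eq_count => r; rewrite /preim /= take0.
apply: f_equal2; first by apply: eq_count => r; rewrite /preim /= take0.
by apply: f_equal2; apply: eq_count => r; rewrite /preim /= take0.
Qed.

Lemma V_perrin k : V k = perrin k.+2.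
Proof.
have H : forall m k, k <= m -> V k = perrin k.+2.
  elim=> [|m IH] j hj; first by case: j hj.
  case: j hj => [|[|[|j]]] hj //.
  rewrite Vrec !IH //; lia.
exact: (H k).
Qed.

Lemma card_Xfam1 : #|Xfam 1| = 0.
Proof.
apply/eqP; rewrite cards_eq0; apply/eqP/setP => X; rewrite !inE.
apply/negbTE; rewrite inXP; apply/negP => /forallP /(_ ord0).
have e : sigma (ord0 : 'I_1) = ord0 by apply: val_inj.
by rewrite !e /okb; case: (@ord0 0 \in X).
Qed.

Lemma card_Xfam n : 0 < n -> #|Xfam n| = perrin n.
Proof.
case: n => [|[|k]] // _; first by rewrite card_Xfam1.
by rewrite card_Xfam2 V_perrin.
Qed.

Lemma iter_mod_gen (T : Type) (g : T -> T) x o k :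
  iter o g x = x -> iter k g x = iter (k %% o) g x.
Proof.
move=> H; have Hq : forall q, iter (q * o) g x = x.
  by elim=> [|q IH] //; rewrite mulSn iterD IH.
by rewrite {1}(divn_eq k o) addnC iterD Hq.
Qed.

Lemma iter_order_dvd (T : finType) (g : T -> T) x k : injective g ->
  (iter k g x == x) = (order g x %| k).
Proof.
move=> ig; have Ho : iter (order g x) g x = x by exact: iter_order.
rewrite (iter_mod_gen k Ho) /dvdn; apply/eqP/eqP => [H|->//].
have := findex_iter (ltn_pmod k (order_gt0 g x)).
by rewrite H findex0.
Qed.

Section Rot.
Variable n : nat.
Local Notation f := (@sigma_set n).

Lemma predS (i : 'I_n) : ord_pred (sigma i) = i.
Proof. exact: ordSK. Qed.
Lemma Spred (i : 'I_n) : sigma (ord_pred i) = i.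
Proof. exact: ord_predK. Qed.

Lemma sigma_setE (X : {set 'I_n}) i : (i \in f X) = (ord_pred i \in X).
Proof. by rewrite /sigma_set (can2_imset_pre _ predS Spred) inE. Qed.

Lemma iter_mem k X i : (i \in iter k f X) = (iter k (@ord_pred n) i \in X).
Proof. by elim: k i => [|k IH] i //=; rewrite sigma_setE IH -iterSr. Qed.

Lemma val_iter_sigma k (i : 'I_n) : val (iter k (@sigma n) i) = (i + k) %% n.
Proof.
elim: k => [|k IH] /=; first by rewrite addn0 modn_small.
by rewrite IH modnSm addnS.
Qed.

Lemma iter_pred_sigma k (i : 'I_n) : iter k (@ord_pred n) (iter k (@sigma n) i) = i.
Proof. by elim: k => [|k IH] //; rewrite iterSr iterS predS. Qed.

Lemma f_inj : injective f.
Proof. exact: imset_inj (@ordS_inj n). Qed.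

Lemma iter_n X : iter n f X = X.
Proof.
apply/setP => i; rewrite iter_mem.
have e : iter n (@sigma n) i = i by apply: val_inj; rewrite val_iter_sigma modnDr modn_small.
by rewrite -{1}e iter_pred_sigma.
Qed.

Lemma inX_f X : inX (f X) = inX X.
Proof.
rewrite !inXP; apply/forallP/forallP => H i.
  by have := H (sigma i); rewrite !sigma_setE !predS.
by have := H (ord_pred i); rewrite !sigma_setE !predS Spred.
Qed.

Lemma inX_iter k X : inX (iter k f X) = inX X.
Proof. by elim: k => [|k IH] //=; rewrite inX_f. Qed.

Hypothesis n_gt0 : 0 < n.

Lemma sorbitE (X : {set 'I_n}) : sorbit X = [set Y | fconnect f X Y].
Proof.
apply/setP => Y; rewrite inE; apply/imsetP/idP => [[k _ ->]|H]; first exact: fconnect_iter.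
exists (Ordinal (ltn_pmod (findex f X Y) n_gt0)); first by rewrite inE.
by rewrite /= -(iter_mod_gen _ (iter_n X)) iter_findex.
Qed.

Lemma card_sorbit X : #|sorbit X| = order f X.
Proof. by rewrite sorbitE /order; apply: eq_card => Y; rewrite inE. Qed.

Lemma sorbit_self (X : {set 'I_n}) : X \in sorbit X.
Proof. by rewrite sorbitE inE connect0. Qed.

Lemma sorbit_eq (X Y : {set 'I_n}) : Y \in sorbit X -> sorbit Y = sorbit X.
Proof.
rewrite !sorbitE inE => hXY; apply/setP => Z; rewrite !inE.
apply/idP/idP => H; first exact: connect_trans hXY H.
by apply: connect_trans H; rewrite (fconnect_sym f_inj).
Qed.

Lemma sorbit_Xfam (X Y : {set 'I_n}) : Y \in sorbit X -> (Y \in Xfam n) = (X \in Xfam n).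
Proof. by case/imsetP => k _ ->; rewrite !inE inX_iter. Qed.

Lemma order_dvd (X : {set 'I_n}) : order f X %| n.
Proof. by rewrite -iter_order_dvd ?iter_n //; exact: f_inj. Qed.

Lemma orbit_count e :
  e * #|[set O in orbits n | #|O| == e]| = #|[set X in Xfam n | order f X == e]|.
Proof.
set A := [set X in Xfam n | order f X == e].
have imA : (@sorbit n) @: A = [set O in orbits n | #|O| == e].
  apply/setP => O; apply/imsetP/idP => [[X XA ->]|].
    move: XA; rewrite !inE => /andP[XF oX].
    by rewrite card_sorbit oX andbT; apply: imset_f; rewrite inE.
  rewrite inE => /andP[/imsetP[X XF ->] cX]; exists X => //.
  by rewrite inE XF -card_sorbit.
rewrite -[#|A|]sum1_card (partition_big_imset (@sorbit n)) /= imA.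
rewrite [RHS](eq_bigr (fun _ => e)); first by rewrite sum_nat_const mulnC.
move=> O; rewrite inE => /andP[/imsetP[X0 X0F ->] cX0].
rewrite sum1dep_card; have cX := eqP cX0; rewrite -cX; apply: eq_card => Y; rewrite !inE.
apply/idP/idP => [/andP[_ /eqP <-]|YO]; first exact: sorbit_self.
have := sorbit_Xfam YO; rewrite !inE => ->.
move: X0F; rewrite inE => -> /=.
by rewrite -card_sorbit (sorbit_eq YO) cX !eqxx.
Qed.
End Rot.

Lemma sum_eq_one (s : seq nat) x : uniq s -> x \in s -> \sum_(e <- s) (x == e : nat) = 1.
Proof.
elim: s => [|y s IH] //= /andP[ys us]; rewrite big_cons inE.
case: eqP => [->|_] /= xs; last by rewrite IH.
rewrite big1_seq // => z /andP[_ zs]; case: eqP => // eyz.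
by move: ys; rewrite eyz zs.
Qed.

Lemma card_by_divisors (T : finType) (A : {set T}) (h : T -> nat) m :
  (forall x, x \in A -> h x \in divisors m) ->
  #|A| = \sum_(e <- divisors m) #|[set x in A | h x == e]|.
Proof.
move=> H; rewrite -sum1_card.
rewrite (eq_bigr (fun x => \sum_(e <- divisors m) (h x == e : nat))); last first.
  by move=> x xA; rewrite sum_eq_one ?divisors_uniq ?H.
rewrite exchange_big /=; apply: eq_bigr => e _.
rewrite (eq_bigr (fun i => if h i == e then 1 else 0)); last by move=> i _; case: eqP.
by rewrite -big_mkcondr sum1dep_card.
Qed.

Definition Lift n e (Y : {set 'I_e}) : {set 'I_n} :=
  [set i : 'I_n | [exists j in Y, val j == i %% e]].

Lemma arith1 i n e : 0 < e -> e %| n -> 0 < n ->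
  ((i %% e) + e).-1 %% e = (i + n).-1 %% e.
Proof.
move=> e0 /dvdnP[q ->] n0.
case: q n0 => [|q] // _.
have Hi := divn_eq i e.
have -> : (i + q.+1 * e).-1 = ((i %% e) + e).-1 + (i %/ e + q) * e.
  rewrite mulSn mulnDl; lia.
by rewrite [in RHS]addnC modnMDl.
Qed.

Section LiftS.
Variables n e : nat.
Hypotheses (e_gt0 : 0 < e) (en : e %| n) (n_gt0 : 0 < n).
Let le_en : e <= n := dvdn_leq n_gt0 en.
Local Notation fn := (@sigma_set n).
Local Notation fe := (@sigma_set e).
Local Notation L := (@Lift n e).

Definition jof (i : 'I_n) : 'I_e := Ordinal (ltn_pmod i e_gt0).
Definition wid (j : 'I_e) : 'I_n := widen_ord le_en j.

Lemma val_wid j : val j = (wid j) %% e.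
Proof. by rewrite /= modn_small. Qed.

Lemma LiftE Y (i : 'I_n) (j : 'I_e) : val j = i %% e -> (i \in L Y) = (j \in Y).
Proof.
move=> hj; rewrite inE; apply/existsP/idP => [[j' /andP[jY /eqP ej]]|jY].
  by have -> : j = j' by apply: val_inj; rewrite hj ej.
by exists j; rewrite jY hj eqxx.
Qed.

Lemma Lift_inj : injective L.
Proof.
move=> Y Y' H; apply/setP => j.
by rewrite -(LiftE Y (val_wid j)) -(LiftE Y' (val_wid j)) H.
Qed.

Lemma Lift_sigma (i : 'I_n) (j : 'I_e) : val j = i %% e -> val (sigma j) = (sigma i) %% e.
Proof. by move=> hj; rewrite !sigmaE hj modnSm (modn_dvdm _ en). Qed.

Lemma Lift_f Y : fn (L Y) = L (fe Y).
Proof.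
apply/setP => i; rewrite sigma_setE (LiftE _ (i := i) (j := jof i)) // sigma_setE.
by apply: LiftE; rewrite /= (modn_dvdm _ en) (arith1 _ e_gt0 en n_gt0).
Qed.

Lemma Lift_iter k Y : iter k fn (L Y) = L (iter k fe Y).
Proof. by elim: k => [|k IH] //=; rewrite IH Lift_f. Qed.

Lemma inX_Lift Y : inX (L Y) = inX Y.
Proof.
rewrite !inXP; apply/forallP/forallP => H j.
  have := H (wid j).
  have h1 := val_wid j.
  have h2 := Lift_sigma h1.
  have h3 := Lift_sigma h2.
  by rewrite (LiftE _ h1) (LiftE _ h2) (LiftE _ h3).
have h1 : val (jof j) = j %% e by [].
have h2 := Lift_sigma h1.
have h3 := Lift_sigma h2.
by rewrite (LiftE _ h1) (LiftE _ h2) (LiftE _ h3); apply: H.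
Qed.

Lemma order_Lift Y : order fn (L Y) = order fe Y.
Proof.
apply/eqP; rewrite eqn_dvd -!iter_order_dvd; try exact: f_inj.
rewrite Lift_iter iter_order ?eqxx /=; last exact: f_inj.
apply/eqP/Lift_inj; rewrite -Lift_iter; apply: iter_order; exact: f_inj.
Qed.

Lemma Lift_surj X : iter e fn X = X -> X = L [set j : 'I_e | wid j \in X].
Proof.
move=> H.
have P1 : forall i, (iter e (@sigma n) i \in X) = (i \in X).
  by move=> i; rewrite -{1}H iter_mem iter_pred_sigma.
have P2 : forall q i, (iter (q * e) (@sigma n) i \in X) = (i \in X).
  by elim=> [|q IH] i //; rewrite mulSn iterD P1 IH.
apply/setP => i; rewrite (LiftE _ (i := i) (j := jof i)) // inE.
rewrite -(P2 (i %/ e) (wid (jof i))); congr (_ \in X); apply: val_inj.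
by rewrite val_iter_sigma /= addnC -divn_eq modn_small.
Qed.

Lemma fix_Lift : [set X in Xfam n | order fn X == e] = L @: [set Y in Xfam e | order fe Y == e].
Proof.
apply/setP => X; rewrite inE; apply/andP/imsetP => [[XF /eqP oX]|[Y]].
  have H : iter e fn X = X by rewrite -oX iter_order //; exact: f_inj.
  exists [set j : 'I_e | wid j \in X]; last exact: Lift_surj.
  by rewrite !inE -inX_Lift -order_Lift -Lift_surj // oX eqxx andbT; rewrite inE in XF.
rewrite !inE => /andP[YF oY] ->.
by rewrite inX_Lift YF order_Lift.
Qed.

Lemma card_fix : #|[set X in Xfam n | order fn X == e]| = #|[set Y in Xfam e | order fe Y == e]|.
Proof. by rewrite fix_Lift card_imset //; exact: Lift_inj. Qed.
End LiftS.

Lemma orbits_e n e : 0 < n -> e %| n -> #|[set O in orbits n | #|O| == e]| = orb1 e.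
Proof.
move=> n0 en; have e0 : 0 < e := dvdn_gt0 n0 en.
apply/eqP; rewrite -(eqn_pmul2l e0) orbit_count // card_fix //.
by rewrite -orbit_count // /orb1 /orbd divn1.
Qed.

Lemma T1 n : 0 < n -> orb n = \sum_(e <- divisors n) orb1 e.
Proof.
move=> n0; rewrite /orb (card_by_divisors (h := fun O : {set {set 'I_n}} => #|O|) (m := n)).
  by apply: eq_big_seq => e; rewrite -dvdn_divisors // => en; apply: orbits_e.
move=> O /imsetP[X _ ->]; rewrite -dvdn_divisors // card_sorbit //; exact: order_dvd.
Qed.

Lemma T2 n : 0 < n -> perrin n = \sum_(e <- divisors n) e * orb1 e.
Proof.
move=> n0; rewrite -card_Xfam // (card_by_divisors (h := order (@sigma_set n)) (m := n)).
  apply: eq_big_seq => e; rewrite -dvdn_divisors // => en.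
  by rewrite -orbit_count // orbits_e.
move=> X _; rewrite -dvdn_divisors //; exact: order_dvd.
Qed.

Lemma mobius1 : mobius 1 = 1%R.
Proof. by []. Qed.

Lemma mobius_sq p d : prime p -> 0 < d -> p * p %| d -> mobius d = 0%R.
Proof.
move=> pp d0 ppd; rewrite /mobius; case: eqP => [//|_].
have : 2 <= logn p d by rewrite -pfactor_dvdn // expnS expn1.
have pd : p \in primes d by rewrite mem_primes pp d0 (dvdn_trans (dvdn_mulr p (dvdnn p)) ppd).
case: allP => // /(_ p pd) /eqP -> //.
Qed.

Lemma mobius_p p d : prime p -> 0 < d -> ~~ (p %| d) -> mobius (p * d) = (- mobius d)%R.
Proof.
move=> pp d0 npd; have p0 := prime_gt0 pp.
have pd0 : 0 < p * d by rewrite muln_gt0 p0 d0.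
have pe : perm_eq (primes (p * d)) (p :: primes d).
  apply: uniq_perm; first exact: primes_uniq.
    by rewrite /= primes_uniq andbT mem_primes pp d0.
  by move=> q; rewrite primesM // primes_prime // !inE.
rewrite /mobius !gtn_eqF // (perm_size pe) (perm_all _ pe) /=.
have -> : logn p (p * d) == 1.
  by rewrite lognM // logn_prime // eqxx (lognE p d) pp d0 (negbTE npd).
have -> : all (fun q => logn q (p * d) == 1) (primes d) = all (fun q => logn q d == 1) (primes d).
  apply: eq_in_all => q; rewrite mem_primes => /and3P[pq _ qd].
  have qp : (q == p) = false by apply/eqP => eqp; move: npd; rewrite -eqp qd.
  by rewrite lognM // logn_prime // qp add0n.
by rewrite /=; case: all; rewrite ?oppr0 // exprS mulN1r.
Qed.

Lemma perm_mul_div e m : 0 < m -> e %| m ->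
  perm_eq [seq d <- divisors m | e %| d] (map (muln e) (divisors (m %/ e))).
Proof.
move=> m0 em; have e0 := dvdn_gt0 m0 em.
have me : m = e * (m %/ e) by rewrite mulnC divnK.
have me0 : 0 < m %/ e by rewrite divn_gt0 // dvdn_leq.
apply: uniq_perm; first by rewrite filter_uniq // divisors_uniq.
  rewrite map_inj_in_uniq ?divisors_uniq // => x y _ _ /eqP.
  by rewrite eqn_pmul2l // => /eqP.
move=> x; rewrite mem_filter -dvdn_divisors //; apply/andP/mapP => [[ex xm]|[y]].
  exists (x %/ e); last by rewrite mulnC divnK.
  rewrite -dvdn_divisors // -(dvdn_pmul2l e0) -me mulnC divnK //.
rewrite -dvdn_divisors // => ym ->; split; first exact: dvdn_mulr.
by rewrite me dvdn_pmul2l.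
Qed.

Lemma perm_div m : 0 < m -> perm_eq (map (divn m) (divisors m)) (divisors m).
Proof.
move=> m0; apply: uniq_perm; last first.
- move=> x; apply/mapP/idP => [[k km ->]|xm].
    rewrite -dvdn_divisors // in km; rewrite -dvdn_divisors //.
    by apply/dvdnP; exists k; rewrite mulnC divnK.
  rewrite -dvdn_divisors // in xm; have x0 := dvdn_gt0 m0 xm.
  have q0 : 0 < m %/ x by rewrite divn_gt0 // dvdn_leq.
  exists (m %/ x); last by rewrite -[X in X %/ (m %/ x)](divnK xm) mulKn.
  rewrite -dvdn_divisors //; apply/dvdnP; exists x; by rewrite mulnC divnK.
- exact: divisors_uniq.
rewrite map_inj_in_uniq ?divisors_uniq // => x y xm ym H.
rewrite -!dvdn_divisors // in xm ym.
have x0 := dvdn_gt0 m0 xm; have y0 := dvdn_gt0 m0 ym.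
have q0 : 0 < m %/ x by rewrite divn_gt0 // dvdn_leq.
have : m %/ x * x = m %/ y * y by rewrite !divnK.
by rewrite /= in H; rewrite H => /eqP; rewrite eqn_pmul2l -?H // => /eqP.
Qed.

Lemma perm_sub d n : 0 < n -> d %| n -> perm_eq (divisors d) [seq x <- divisors n | x %| d].
Proof.
move=> n0 dn; have d0 := dvdn_gt0 n0 dn.
apply: uniq_perm; rewrite ?filter_uniq ?divisors_uniq // => x.
rewrite mem_filter -!dvdn_divisors //; apply/idP/andP => [xd|[]//].
by split=> //; exact: dvdn_trans dn.
Qed.

Lemma sum_mobius m : 0 < m -> (\sum_(d <- divisors m) mobius d = (m == 1)%:R)%R.
Proof.
case: m => [//|[|m]] _; first by rewrite big_seq1.
set M := m.+2; have M1 : 1 < M by [].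
have pp := pdiv_prime M1; set p := pdiv M in pp *.
have pM : p %| M := pdiv_dvd M.
have p0 := prime_gt0 pp.
set M' := M %/ p; have M0 : 0 < M by [].
have MM : M = p * M' by rewrite mulnC divnK.
have M'0 : 0 < M' by rewrite divn_gt0 // dvdn_leq.
rewrite (bigID (fun d => p %| d)) /=.
have S1 : (\sum_(d <- divisors M | true && (p %| d)%N) mobius d =
          - \sum_(k <- divisors M' | ~~ (p %| k)%N) mobius k)%R.
  rewrite -big_filter (perm_big _ (perm_mul_div M0 pM)) big_map -/M'.
  rewrite (bigID (fun k => p %| k)) /= big1_seq ?add0r; last first.
    move=> k /andP[pk km]; have k0 : 0 < k by apply: (dvdn_gt0 M'0); rewrite dvdn_divisors.
    apply: (@mobius_sq p) => //; first by rewrite muln_gt0 p0.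
    by rewrite dvdn_pmul2l.
  rewrite -sumrN big_seq_cond [RHS]big_seq_cond; apply: eq_bigr => k /andP[km npk].
  have k0 : 0 < k by apply: (dvdn_gt0 M'0); rewrite dvdn_divisors.
  by rewrite mobius_p.
have S2 : (\sum_(d <- divisors M | true && ~~ (p %| d)%N) mobius d =
          \sum_(k <- divisors M' | ~~ (p %| k)%N) mobius k)%R.
  rewrite -big_filter -[RHS]big_filter; apply: perm_big.
  apply: uniq_perm; rewrite ?filter_uniq ?divisors_uniq // => x.
  rewrite !mem_filter -!dvdn_divisors //; apply/andP/andP => [[npx xM]|[npx xM']].
    by split=> //; move: xM; rewrite MM Gauss_dvdr // coprime_sym prime_coprime.
  by split=> //; rewrite MM dvdn_mull.
by rewrite S1 S2 addNr.
Qed.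

Local Open Scope ring_scope.

Lemma divn_eq1 n e : (0 < n)%N -> (e %| n)%N -> (n %/ e == 1)%N = (e == n).
Proof.
move=> n0 en; have e0 := dvdn_gt0 n0 en.
apply/eqP/eqP => [H|->]; last by rewrite divnn n0.
by rewrite -(divnK en) H mul1n.
Qed.

Lemma M3 n e : (0 < n)%N -> (e %| n)%N ->
  \sum_(d <- divisors n | (e %| d)%N) ((mobius (n %/ d))%:~R : rat) = (e == n)%:R.
Proof.
move=> n0 en; have e0 := dvdn_gt0 n0 en.
have m0 : (0 < n %/ e)%N by rewrite divn_gt0 // dvdn_leq.
rewrite -big_filter (perm_big _ (perm_mul_div n0 en)) big_map.
rewrite (eq_bigr (fun k => (mobius (n %/ e %/ k))%:~R)); last by move=> k _; rewrite divnMA.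
rewrite -(big_map (divn (n %/ e)) xpredT (fun k => (mobius k)%:~R)).
rewrite (perm_big _ (perm_div m0)) -rmorph_sum sum_mobius // divn_eq1 //.
by case: (e == n).
Qed.

Lemma claim n : (0 < n)%N ->
  \sum_(d <- divisors n) (perrin d)%:R * (mobius (n %/ d))%:~R = ((n * orb1 n)%N%:R : rat).
Proof.
move=> n0.
rewrite (eq_big_seq (fun d => \sum_(e <- divisors n | (e %| d)%N)
   ((e * orb1 e)%N%:R * (mobius (n %/ d))%:~R : rat))); last first.
  move=> d; rewrite -dvdn_divisors // => dn; have d0 := dvdn_gt0 n0 dn.
  rewrite T2 // natr_sum mulr_suml (perm_big _ (perm_sub n0 dn)) big_filter //.
rewrite (eq_bigr (fun d => \sum_(e <- divisors n) if (e %| d)%N then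
   ((e * orb1 e)%N%:R * (mobius (n %/ d))%:~R : rat) else 0)); last by move=> d _; rewrite big_mkcond.
rewrite exchange_big /=.
rewrite (eq_big_seq (fun e => ((e * orb1 e)%N%:R : rat) * (e == n)%:R)); last first.
  move=> e; rewrite -dvdn_divisors // => en.
  by rewrite -big_mkcond -mulr_sumr M3.
rewrite (bigD1_seq n) ?divisors_id ?divisors_uniq //= eqxx mulr1 big1 ?addr0 //.
by move=> e /negbTE ->; rewrite mulr0.
Qed.

Theorem theorem4p1 (n : nat) : (0 < n)%N ->
  orb n = (\sum_(d <- divisors n) orb1 d)%N /\
  (orb1 n)%:R = (n%:R)^-1 * \sum_(d <- divisors n) (perrin d)%:R * (mobius (n %/ d))%:~R :> rat.
Proof.
move=> n0; split; first exact: T1.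
rewrite claim // natrM mulKf //.
by rewrite pnatr_eq0 -lt0n.
Qed.
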